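(* Let $Q$ be a commutative loop possessing a subgroup of index $2$. The following are equivalent: (i) $Q$ is an A-loop and $[Q:N_\mu(Q)]\le 2$. (ii) $Q\cong G(f)$, where $G$ is a commutative group of index $2$ and $f$ is a permutation of $G$ satisfying, for all $x,y\in G$: $f(xy)=f(x)f(y)f(1)^{-1}$; $f(x^2)=x^2f(1)$; and $f^2(x)^2f(x)^{-2}=f^2(1)$ (where $f^2=f\circ f$). (iii) $Q\cong G(f)$, where $G$ is a commutative group of index $2$ and $f$ is a permutation of $G$ satisfying $f(xy)=f(x)f(y)f(1)^{-1}$ and $f(x^2)=x^2f(1)$ for all $x,y\in G$, and $f(f(1))=f(1)^2$. (iv) $Q\cong G(f)$, where $G$ is a commutative group of index $2$, and $f(x)=g(x)t$ for all $x\in G$, with $g\in\mathrm{Aut}(G)$ satisfying $g(x^2)=x^2$ for all $x\in G$ and $t\in G$ a fixed point of $g$.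
   Context: A loop is a set with a binary operation and a neutral element $1$ in which all left translations $L_x$ and right translations $R_x$ are bijections. Its inner mapping group is the permutation group generated by $L_{x,y}=L_{yx}^{-1}L_yL_x$, $R_{x,y}=R_{xy}^{-1}R_yR_x$, $T_x=L_x^{-1}R_x$; a loop is an A-loop (automorphic loop) if every inner mapping is an automorphism. The middle nucleus is $N_\mu(Q)=\{y:(xy)z=x(yz)\ \forall x,z\}$. Construction $G(f)$: for a commutative group $G$ (written multiplicatively) and a bijection $f:G\to G$, let $\overline{G}$ be a disjoint copy of $G$, and let $G(f)$ be $G\cup\overline{G}$ with multiplication $x*y=xy$, $x*\overline{y}=\overline{xy}$, $\overline{x}*y=\overline{xy}$, $\overline{x}*\overline{y}=f(xy)$ for $x,y\in G$. *)

(* Defs.v *)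
(* loops are arbitrary (possibly infinite) types with an
   explicit binary operation; commutative groups are MathComp zmodTypes
   (written additively). *)
From HB Require Import structures.
From mathcomp Require Import all_boot all_algebra.
Set Implicit Arguments. Unset Strict Implicit. Unset Printing Implicit Defensive.
Import GRing.Theory.
Local Open Scope ring_scope.

Section Loops.
Variables (Q : Type) (mul : Q -> Q -> Q) (e : Q).

Definition is_loop : Prop :=
  [/\ forall x, mul e x = x /\ mul x e = x,
      forall x, bijective (mul x) &
      forall x, bijective (fun y => mul y x)].

Definition loop_commutative : Prop := forall x y, mul x y = mul y x.

(* generators of the inner mapping group, written out pointwise:
   L_{x,y} = L_{yx}^{-1} L_y L_x,  R_{x,y} = R_{xy}^{-1} R_y R_x,
   T_x = L_x^{-1} R_x  (maps composed right to left). *)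
Inductive inner_mapping : (Q -> Q) -> Prop :=
  | Inn_id : inner_mapping id
  | Inn_L (x y : Q) (f : Q -> Q) :
      (forall z, mul (mul y x) (f z) = mul y (mul x z)) -> inner_mapping f
  | Inn_R (x y : Q) (f : Q -> Q) :
      (forall z, mul (f z) (mul x y) = mul (mul z x) y) -> inner_mapping f
  | Inn_T (x : Q) (f : Q -> Q) :
      (forall z, mul x (f z) = mul z x) -> inner_mapping f
  | Inn_comp (f g : Q -> Q) :
      inner_mapping f -> inner_mapping g -> inner_mapping (f \o g)
  | Inn_inv (f g : Q -> Q) :
      inner_mapping f -> cancel f g -> cancel g f -> inner_mapping g
  | Inn_ext (f g : Q -> Q) :
      inner_mapping f -> f =1 g -> inner_mapping g.

Definition loop_automorphism (f : Q -> Q) : Prop :=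
  bijective f /\ forall x y, f (mul x y) = mul (f x) (f y).

Definition A_loop : Prop :=
  forall f, inner_mapping f -> loop_automorphism f.

Definition middle_nucleus (y : Q) : Prop :=
  forall x z, mul (mul x y) z = mul x (mul y z).

Definition is_subgroup (H : Q -> Prop) : Prop :=
  [/\ H e,
      forall a b, H a -> H b -> H (mul a b),
      forall a b x, H a -> H b -> mul a x = b -> H x,
      forall a b x, H a -> H b -> mul x a = b -> H x &
      forall a b c, H a -> H b -> H c -> mul (mul a b) c = mul a (mul b c)].

Definition index_le2 (H : Q -> Prop) : Prop :=
  exists c, forall x, H x \/ exists2 h, H h & x = mul c h.

Definition index2 (H : Q -> Prop) : Prop :=
  (exists x, ~ H x) /\ index_le2 H.

End Loops.

(* the construction G(f): inl x = x in G, inr x = \bar x *)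
Definition Gf_mul (G : zmodType) (f : G -> G) (u v : G + G) : G + G :=
  match u, v with
  | inl x, inl y => inl (x + y)
  | inl x, inr y => inr (x + y)
  | inr x, inl y => inr (x + y)
  | inr x, inr y => inl (f (x + y))
  end.

Definition loop_iso (Q1 Q2 : Type) (m1 : Q1 -> Q1 -> Q1) (m2 : Q2 -> Q2 -> Q2)
  : Prop :=
  exists phi : Q1 -> Q2, bijective phi /\ forall x y, phi (m1 x y) = m2 (phi x) (phi y).

Definition additive_aut (G : zmodType) (g : G -> G) : Prop :=
  bijective g /\ forall x y, g (x + y) = g x + g y.

(* Main.v *)
Require Import Defs.
From HB Require Import structures.
From mathcomp Require Import all_boot all_algebra.
From Stdlib Require Import ClassicalEpsilon FunctionalExtensionality.
Set Implicit Arguments. Unset Strict Implicit. Unset Printing Implicit Defensive.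
Import GRing.Theory.
Local Open Scope ring_scope.

Section Cl.
Variable T : Type.
Definition cl_eq (x y : T) : bool :=
  if excluded_middle_informative (x = y) then true else false.
Lemma cl_eqP : Equality.axiom cl_eq.
Proof. by move=> x y; rewrite /cl_eq; case: excluded_middle_informative => h; constructor. Qed.
Definition cl_find (P : pred T) (n : nat) : option T :=
  match excluded_middle_informative (exists x, P x) with
  | left H => Some (proj1_sig (constructive_indefinite_description _ H))
  | right _ => None end.
Lemma cl_find_some P n x : cl_find P n = Some x -> P x.
Proof.
rewrite /cl_find; case: excluded_middle_informative => // H [<-].
exact: proj2_sig (constructive_indefinite_description _ H).
Qed.
Lemma cl_find_ex (P : pred T) : (exists x, P x) -> exists n, cl_find P n.
Proof. by move=> H; exists 0%N; rewrite /cl_find; case: excluded_middle_informative. Qed.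
Lemma cl_find_ext (P Q : pred T) : P =1 Q -> cl_find P =1 cl_find Q.
Proof.
move=> h; have -> : P = Q by apply: FunctionalExtensionality.functional_extensionality.
by [].
Qed.
End Cl.

Record KData := KD {
  kQ : Type; kmul : kQ -> kQ -> kQ; ke : kQ; kK : kQ -> Prop; kinv : kQ -> kQ;
  kK_e : kK ke; kK_mul : forall a b, kK a -> kK b -> kK (kmul a b);
  kK_inv : forall a, kK a -> kK (kinv a);
  k_assoc : forall a b c, kK a -> kK b -> kK c -> kmul (kmul a b) c = kmul a (kmul b c);
  k_comm : forall a b, kmul a b = kmul b a;
  k_e : forall a, kmul ke a = a;
  k_inv : forall a, kK a -> kmul (kinv a) a = ke }.

Definition kcar (d : KData) := {x : kQ d | @kK d x}.
HB.instance Definition _ d := hasDecEq.Build (kcar d) (@cl_eqP _).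
HB.instance Definition _ d := hasChoice.Build (kcar d) (@cl_find_some _) (@cl_find_ex _) (@cl_find_ext _).

Section KZ.
Variable d : KData.
Lemma kval_inj (a b : kcar d) : proj1_sig a = proj1_sig b -> a = b.
Proof.
case: a b => a ha [b hb] /= eab; subst b.
by rewrite (Classical_Prop.proof_irrelevance _ ha hb).
Qed.
Definition kadd (a b : kcar d) : kcar d :=
  exist _ (kmul (proj1_sig a) (proj1_sig b)) (kK_mul (proj2_sig a) (proj2_sig b)).
Definition kzero : kcar d := exist _ (@ke d) (@kK_e d).
Definition kopp (a : kcar d) : kcar d := exist _ (@kinv d (proj1_sig a)) (kK_inv (proj2_sig a)).
Lemma kaddA : associative kadd.
Proof. by move=> a b c; apply: kval_inj; case: a b c => [a ha] [b hb] [c hc]; rewrite /= k_assoc. Qed.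
Lemma kaddC : commutative kadd.
Proof. by move=> a b; apply: kval_inj; rewrite /= k_comm. Qed.
Lemma kadd0 : left_id kzero kadd.
Proof. by move=> a; apply: kval_inj; rewrite /= k_e. Qed.
Lemma kaddN : left_inverse kzero kopp kadd.
Proof. by move=> a; apply: kval_inj; rewrite /= k_inv //; case: a. Qed.
End KZ.
HB.instance Definition _ d := GRing.isZmodule.Build (kcar d) (@kaddA d) (@kaddC d) (@kadd0 d) (@kaddN d).

Lemma kcar_add d (a b : kcar d) : proj1_sig (a + b) = kmul (proj1_sig a) (proj1_sig b).
Proof. by []. Qed.
Lemma kcar_zero d : proj1_sig (0 : kcar d) = @ke d.
Proof. by []. Qed.

Inductive zexp := ZAtom of nat | ZZero | ZAdd of zexp & zexp | ZOpp of zexp.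

Section ZNorm.
Variable G : zmodType.
Fixpoint zeval (env : seq G) (x : zexp) : G :=
  match x with
  | ZAtom n => nth 0 env n
  | ZZero => 0
  | ZAdd a b => zeval env a + zeval env b
  | ZOpp a => - zeval env a
  end.
Fixpoint evalc (env : seq G) (c : seq int) : G :=
  match c with [::] => 0 | k :: c' => head 0 env *~ k + evalc (behead env) c' end.
Fixpoint ladd (c1 c2 : seq int) : seq int :=
  match c1, c2 with
  | [::], c => c
  | c, [::] => c
  | a :: c1', b :: c2' => (a + b) :: ladd c1' c2'
  end.
Definition lopp (c : seq int) := map (fun k => - k) c.
Definition latom (n : nat) : seq int := rcons (nseq n 0) 1.
Fixpoint znorm (x : zexp) : seq int :=
  match x with
  | ZAtom n => latom n
  | ZZero => [::]
  | ZAdd a b => ladd (znorm a) (znorm b)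
  | ZOpp a => lopp (znorm a)
  end.
Lemma evalc_add env c1 c2 : evalc env (ladd c1 c2) = evalc env c1 + evalc env c2.
Proof.
elim: c1 c2 env => [|a c1 IH] [|b c2] env /=; rewrite ?add0r ?addr0 //.
by rewrite IH mulrzDr addrACA.
Qed.
Lemma evalc_opp env c : evalc env (lopp c) = - evalc env c.
Proof. by elim: c env => [|a c IH] env /=; rewrite ?oppr0 // IH mulrNz opprD. Qed.
Lemma evalc_atom env n : evalc env (latom n) = nth 0 env n.
Proof.
elim: n env => [|n IH] [|x env] /=; rewrite ?addr0 //.
- by rewrite /latom /= IH /= add0r; case: n {IH}.
- by rewrite add0r IH.
Qed.
Lemma evalc_norm env x : zeval env x = evalc env (znorm x).
Proof.
elim: x => [n||a IHa b IHb|a IHa] /=.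
- by rewrite evalc_atom.
- by [].
- by rewrite evalc_add IHa IHb.
- by rewrite evalc_opp IHa.
Qed.
Lemma evalc_zero env c : all (fun k => k == 0) c -> evalc env c = 0.
Proof.
by elim: c env => [|a c IH] env //= /andP[/eqP -> /IH ->]; rewrite mulr0z add0r.
Qed.
Lemma zsound env a b :
  all (fun k => k == 0) (ladd (znorm a) (lopp (znorm b))) -> zeval env a = zeval env b.
Proof.
move=> H; apply/eqP; rewrite -subr_eq0 !evalc_norm -evalc_opp -evalc_add.
by rewrite evalc_zero.
Qed.
End ZNorm.

Ltac zaddAtom a l :=
  lazymatch l with
  | context [cons a _] => l
  | _ => constr:(cons a l)
  end.
Ltac zcollect t l :=
  lazymatch t with
  | (?a + ?b)%R => let l1 := zcollect a l in zcollect b l1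
  | (- ?a)%R => zcollect a l
  | 0%R => l
  | _ => zaddAtom t l
  end.
Ltac zindex a l :=
  lazymatch l with
  | cons a _ => constr:(0%N)
  | cons _ ?l' => let n := zindex a l' in constr:(S n)
  end.
Ltac zreify t l :=
  lazymatch t with
  | (?a + ?b)%R => let ra := zreify a l in let rb := zreify b l in constr:(ZAdd ra rb)
  | (- ?a)%R => let ra := zreify a l in constr:(ZOpp ra)
  | 0%R => constr:(ZZero)
  | _ => let n := zindex t l in constr:(ZAtom n)
  end.
Ltac zgroup :=
  lazymatch goal with
  | |- @eq ?T ?a ?b =>
    let l0 := zcollect a (@nil T) in
    let l := zcollect b l0 in
    let ra := zreify a l in
    let rb := zreify b l in
    refine (@zsound _ l ra rb _); vm_compute; reflexivity
  end.


Definition LA (T : Type) (m : T -> T -> T) : Prop :=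
  forall x y (h : T -> T), (forall z, m (m y x) (h z) = m y (m x z)) ->
    forall u v, h (m u v) = m (h u) (h v).

Lemma LA_transport (A B : Type) (mA : A -> A -> A) (mB : B -> B -> B)
  (psi : A -> B) (psi' : B -> A) :
  cancel psi psi' -> cancel psi' psi ->
  (forall u v, psi (mA u v) = mB (psi u) (psi v)) -> LA mB -> LA mA.
Proof.
move=> K1 K2 M hB x y h H u v.
pose hb := psi \o h \o psi'.
have Hb : forall z, mB (mB (psi y) (psi x)) (hb z) = mB (psi y) (mB (psi x) z).
  move=> z; rewrite /hb /= -!M H -{2}(K2 z) -!M //.
apply: (can_inj K1).
have E : forall w, psi (h w) = hb (psi w) by move=> w; rewrite /hb /= K1.
by rewrite M !E M (hB _ _ _ Hb).
Qed.

Section LoopGen.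
Variables (Q : Type) (mul : Q -> Q -> Q) (e : Q).
Hypotheses (hl : is_loop mul e) (hc : loop_commutative mul).

Lemma L_inj x : injective (mul x).
Proof. by case: hl => _ hb _; apply: bij_inj. Qed.

Lemma L_aut x y f : LA mul ->
  (forall z, mul (mul y x) (f z) = mul y (mul x z)) -> loop_automorphism mul f.
Proof.
move=> hLA Hf; split; last exact: hLA Hf.
case: hl => _ hb _.
case: (hb (mul y x)) => g gK Kg.
apply: (@eq_bij _ _ (g \o mul y \o mul x)).
  by apply: bij_comp; [apply: bij_comp; [exists (mul (mul y x)) |] |].
by move=> z /=; rewrite -Hf gK.
Qed.

Lemma A_loop_of_LA : LA mul -> A_loop mul.
Proof.
move=> hLA f; elim.
- by split=> //; exists id.
- by move=> x y g Hg; exact: L_aut Hg.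
- move=> x y g Hg; apply: (@L_aut x y) => // z.
  by rewrite (hc y x) hc Hg hc (hc z x).
- move=> x g Hg.
  have E : g =1 id by move=> z; apply: (@L_inj x); rewrite Hg hc.
  split; first by apply: (eq_bij _ (fun z => esym (E z))); exists id.
  by move=> u v; rewrite !E.
- move=> g1 g2 _ [b1 m1] _ [b2 m2]; split; first exact: bij_comp.
  by move=> u v /=; rewrite m2 m1.
- move=> g1 g2 _ [b1 m1] K1 K2; split; first by exists g1.
  by move=> u v; rewrite -{1}(K2 u) -{1}(K2 v) -m1 K1.
- move=> g1 g2 _ [b1 m1] E; split; first exact: eq_bij E.
  by move=> u v; rewrite -!E.
Qed.

Lemma LA_of_A_loop : A_loop mul -> LA mul.
Proof. by move=> hA x y h H; case: (hA h (Inn_L H)). Qed.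

End LoopGen.

Section GfGen.
Variables (G : zmodType) (f : G -> G).
Hypothesis finj : injective f.

Lemma Gf_inj U V W : Gf_mul f U V = Gf_mul f U W -> V = W.
Proof.
case: U V W => u [v|v] [w|w] //= [].
- by move/addrI ->.
- by move/addrI ->.
- by move/addrI ->.
- by move/finj/addrI ->.
Qed.

Lemma Gf_middle y : middle_nucleus (Gf_mul f) (inl y).
Proof. by move=> [x|x] [z|z] /=; rewrite addrA. Qed.
End GfGen.

Section GfIV.
Variables (G : zmodType) (g : G -> G) (t : G).
Hypotheses (hg : additive_aut g) (g2 : forall x, g (x + x) = x + x) (gt : g t = t).
Let f := fun x => g x + t.

Lemma gD x y : g (x + y) = g x + g y. Proof. by case: hg. Qed.
Lemma g0 : g 0 = 0.
Proof. by apply: (@addrI _ (g 0)); rewrite -gD !addr0. Qed.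
Lemma gN x : g (- x) = - g x.
Proof. by apply: (@addrI _ (g x)); rewrite -gD !subrr g0. Qed.
Lemma gB x y : g (x - y) = g x - g y.
Proof. by rewrite gD gN. Qed.

Lemma f_inj : injective f.
Proof. by case: hg => [[gi K1 K2] _] x y; rewrite /f => /addIr /(can_inj K1). Qed.

Lemma LA_Gf : LA (Gf_mul f).
Proof.
case: hg => [[gi gK Kg] _].
move=> X Y h H.
have Hi := Gf_inj f_inj.
suff [phi [E M]] : exists phi, (forall Z, Gf_mul f (Gf_mul f Y X) (phi Z) = Gf_mul f Y (Gf_mul f X Z))
   /\ (forall u v, phi (Gf_mul f u v) = Gf_mul f (phi u) (phi v)).
  have hE : forall Z, h Z = phi Z by move=> Z; apply: (Hi (Gf_mul f Y X)); rewrite H E.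
  by move=> u v; rewrite !hE M.
clear H h.
case: X Y => [x|x] [y|y].
- exists id; split=> // -[z|z] /=; by rewrite addrA.
- exists id; split=> // -[z|z] /=; by rewrite addrA.
- set c := gi (y - g y).
  have gc : g c = y - g y by rewrite /c Kg.
  have cc : c + c = 0.
    have h := g2 y; rewrite gD in h.
    rewrite -g2 gD gc; transitivity ((y + y) - (g y + g y)); first zgroup.
    by rewrite h subrr.
  exists (fun Z => match Z with inl z => inl z | inr z => inr (z + c) end); split.
    case=> z /=; first by rewrite addrA.
    by rewrite /f; congr inl; rewrite !gD gc; zgroup.
  case=> a [] b /=; rewrite ?addrA //.
  - by rewrite addrAC.
  - rewrite /f; congr (inl (g _ + t)); transitivity (a + b + (c + c)); first by rewrite cc addr0. zgroup.
- have ggy : g (g y) + g (g y) = g y + g y by rewrite -gD g2.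
  exists (fun Z => match Z with inl z => inl (g z) | inr z => inr (g z - g y + y) end); split.
    case=> z /=; rewrite /f; [congr inl|congr inr]; rewrite !gD; zgroup.
  case=> a [] b /=; rewrite /f; [congr inl|congr inr|congr inr|congr inl]; rewrite ?gD ?gN ?gt; try zgroup.
  transitivity (g (g a) + g (g b) + t + (g y + g y - (g (g y) + g (g y)))); last zgroup.
  by rewrite ggy subrr addr0.
Qed.
End GfIV.

Section KExists.
Variables (Q : Type) (mul : Q -> Q -> Q) (e : Q).
Hypotheses (hl : is_loop mul e) (hc : loop_commutative mul).

Lemma Linj x : injective (mul x).
Proof. by case: hl => _ hb _; apply: bij_inj. Qed.
Lemma Rinj x : injective (fun y => mul y x).
Proof. by case: hl => _ _ hb; apply: bij_inj. Qed.
Lemma mule x : mul e x = x. Proof. by case: hl => h _ _; case: (h x). Qed.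
Lemma mulxe x : mul x e = x. Proof. by case: hl => h _ _; case: (h x). Qed.

Lemma mid_e : middle_nucleus mul e.
Proof. by move=> x z; rewrite mulxe mule. Qed.
Lemma mid_mul a b : middle_nucleus mul a -> middle_nucleus mul b ->
  middle_nucleus mul (mul a b).
Proof. by move=> ha hb x z; rewrite -ha hb ha hb. Qed.
Lemma mid_div a b y : middle_nucleus mul a -> middle_nucleus mul b ->
  mul a y = b -> middle_nucleus mul y.
Proof.
move=> ha hb hy.
case: hl => _ _ hR; case: (hR a) => r _ rK.
set m := r e.
have ma : mul m a = e by apply: rK.
have am : mul a m = e by rewrite hc.
have L1 : forall z, mul m (mul a z) = z by move=> z; rewrite -ha ma mule.
have L2 : forall z, mul a (mul m z) = z.
  by move=> z; apply: (@Linj m); rewrite L1.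
have R1 : forall w, mul (mul w a) m = w by move=> w; rewrite ha am mulxe.
have R2 : forall x, mul (mul x m) a = x.
  by move=> x; apply: (@Rinj m); rewrite /= R1.
have hm : middle_nucleus mul m.
  move=> x z; rewrite -{2}(R2 x) ha L2.
  by rewrite -{1}(R2 x) R1.
have -> : y = mul m b by rewrite -hy L1.
exact: mid_mul.
Qed.

Lemma exists_K :
  (exists H : Q -> Prop, is_subgroup mul e H /\ index2 mul H) ->
  index_le2 mul (middle_nucleus mul) ->
  exists (K : Q -> Prop) (c : Q),
   [/\ K e, (forall a b, K a -> K b -> K (mul a b)),
       (forall a b y, K a -> K b -> mul a y = b -> K y),
       (forall y, K y -> middle_nucleus mul y) &
    (~ K c /\ forall x, K x \/ exists2 h, K h & x = mul c h)].
Proof.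
move=> [H [[He Hm Hd _ _] [[x0 nx0] [c hcd]]]] [c' hN].
case: (classic (forall y, middle_nucleus mul y)) => hall.
  exists H, c; split; [done|done|exact: Hd|by move=> y _; apply: hall|].
  split=> // Hc; apply: nx0; case: (hcd x0) => // -[h hh ->]; exact: Hm.
have nc' : ~ middle_nucleus mul c'.
  move=> mc; apply: hall => y; case: (hN y) => // -[h hh ->]; exact: mid_mul.
exists (middle_nucleus mul), c'; split; [exact: mid_e|exact: mid_mul|exact: mid_div|done|by split].
Qed.
End KExists.

Lemma inj_surj_bij (A B : Type) (p : A -> B) :
  injective p -> (forall b, exists a, p a = b) -> bijective p.
Proof.
move=> pi ps.
exists (fun b => proj1_sig (constructive_indefinite_description _ (ps b))).
- by move=> a; apply: pi; exact: proj2_sig (constructive_indefinite_description _ (ps (p a))).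
- by move=> b; exact: proj2_sig (constructive_indefinite_description _ (ps b)).
Qed.

Definition unsum (T : Type) (u : T + T) : T := match u with inl z => z | inr z => z end.

Section Construct.
Variables (Q : Type) (mul : Q -> Q -> Q) (e : Q).
Hypotheses (hl : is_loop mul e) (hc : loop_commutative mul) (hA : A_loop mul).
Variables (K : Q -> Prop) (c : Q).
Hypotheses (KE : K e) (KM : forall a b, K a -> K b -> K (mul a b))
  (KDiv : forall a b y, K a -> K b -> mul a y = b -> K y)
  (Kmid : forall y, K y -> middle_nucleus mul y)
  (Kc : ~ K c) (Kdec : forall x, K x \/ exists2 h, K h & x = mul c h).

Definition kinvQ a := epsilon (inhabits e) (fun b => mul b a = e).
Lemma kinvQ_spec a : mul (kinvQ a) a = e.
Proof.
apply: (epsilon_spec (inhabits e) (fun b => mul b a = e)).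
case: hl => _ _ hR; case: (hR a) => r _ rK; exists (r e); exact: rK.
Qed.
Lemma Kinv a : K a -> K (kinvQ a).
Proof. move=> ha; apply: (KDiv ha KE); rewrite hc; exact: kinvQ_spec. Qed.
Lemma Kassoc a b d : K a -> K b -> K d -> mul (mul a b) d = mul a (mul b d).
Proof. by move=> _ hb _; apply: Kmid. Qed.

Definition dK : KData := @KD Q mul e K kinvQ KE KM Kinv Kassoc hc (mule hl)
  (fun a _ => kinvQ_spec a).
Notation G := (kcar dK).
Notation val := (@proj1_sig _ _).

Lemma valI (a b : G) : val a = val b -> a = b.
Proof. exact: (@kval_inj dK a b). Qed.

Lemma Kcc z : K z -> K (mul c (mul c z)).
Proof.
move=> hz; case: (Kdec (mul c (mul c z))) => // -[h hh] /(Linj hl) E.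
by case: Kc; apply: (KDiv hz hh); rewrite hc.
Qed.

Definition fK (z : G) : G := exist _ (mul c (mul c (val z))) (Kcc (proj2_sig z)).
Definition psi (u : G + G) : Q :=
  match u with inl k => val k | inr k => mul c (val k) end.

Lemma fK_inj : injective fK.
Proof. move=> a b /(congr1 val) /= /(Linj hl) /(Linj hl) E. exact: valI. Qed.
Lemma fK_surj w : exists z, fK z = w.
Proof.
case: hl => _ hL _; case: (hL c) => r Kr rK.
set z0 := r (r (val w)).
have E : mul c (mul c z0) = val w by rewrite /z0 !rK.
have hz : K z0.
  case: (Kdec z0) => // -[h hh Ez]; case: Kc.
  have hk := Kcc hh.
  apply: (KDiv hk (proj2_sig w)); rewrite hc -E Ez //.
by exists (exist _ z0 hz); apply: valI.
Qed.

Lemma psi_inj : injective psi.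
Proof.
move=> [a|a] [b|b] /=.
- by move=> E; rewrite (valI E).
- move=> E; case: Kc; apply: (KDiv (proj2_sig b) (proj2_sig a)); by rewrite hc -E.
- move=> E; case: Kc; apply: (KDiv (proj2_sig a) (proj2_sig b)); by rewrite hc E.
- by move/(Linj hl) => E; rewrite (valI E).
Qed.
Lemma psi_surj q : exists u, psi u = q.
Proof.
case: (Kdec q) => [hq|[h hh ->]].
  by exists (inl (exist _ q hq)).
by exists (inr (exist _ h hh)).
Qed.
Lemma psi_morph u v : psi (Gf_mul fK u v) = mul (psi u) (psi v).
Proof.
case: u v => [[a ha]|[a ha]] [[b hb]|[b hb]] //=.
- by rewrite [RHS]hc (Kmid hb) [mul b a]hc.
- by rewrite (Kmid ha).
- by rewrite [mul c b]hc -(Kmid hb) (Kmid ha) [RHS]hc.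
Qed.

Lemma construct : exists (G : zmodType) (f : G -> G),
   [/\ loop_iso mul (Gf_mul f), bijective f,
       forall x y, f (x + y) = f x + f y - f 0,
       forall x, f (x + x) = x + x + f 0 &
       f (f 0) = f 0 + f 0].
Proof.
have pbij : bijective psi by apply: inj_surj_bij; [exact: psi_inj|exact: psi_surj].
case: pbij => phi psiK phiK.
have fbij : bijective fK by apply: inj_surj_bij; [exact: fK_inj|exact: fK_surj].
have LG : LA (Gf_mul fK).
  apply: (LA_transport psiK phiK psi_morph).
  exact: LA_of_A_loop.
have Hi := Gf_inj fK_inj.
case: (fbij) => finv fiK Kfi.
exists G, fK.
set f := fK.
have P1 : forall x y, f (x + y) = f x + f y - f 0.
  move=> x y.
  pose h := fun Z : G + G => match Z with inl z => inl (f z - f 0) | inr z => inr (f z - f 0) end.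
  have Hh : forall Z, Gf_mul f (Gf_mul f (inr 0) (inr 0)) (h Z) = Gf_mul f (inr 0) (Gf_mul f (inr 0) Z).
    by case=> z /=; rewrite ?add0r ?addr0 addrC subrK.
  have E : f (x + y) - f 0 = (f x - f 0) + (f y - f 0).
    exact (congr1 (@unsum G) (LG _ _ _ Hh (inl x) (inl y))).
  by rewrite -[f (x + y)](subrK (f 0)) E; zgroup.
have P3 : f (f 0) = f 0 + f 0.
  pose h := fun Z : G + G => match Z with inl z => inl (f z - f 0) | inr z => inr (f z - f 0) end.
  have Hh : forall Z, Gf_mul f (Gf_mul f (inr 0) (inr 0)) (h Z) = Gf_mul f (inr 0) (Gf_mul f (inr 0) Z).
    by case=> z /=; rewrite ?add0r ?addr0 addrC subrK.
  have E : f (f (0 + 0)) - f 0 = f ((f 0 - f 0) + (f 0 - f 0)).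
    exact (congr1 (@unsum G) (LG _ _ _ Hh (inr 0) (inr 0))).
  rewrite !addr0 subrr addr0 in E.
  by rewrite -[f (f 0)](subrK (f 0)) E.
have P2 : forall y, f (y + y) = y + y + f 0.
  move=> y.
  pose h := fun Z : G + G => match Z with inl z => inl z | inr z => inr (finv (y + f z) - y) end.
  have Hh : forall Z, Gf_mul f (Gf_mul f (inl y) (inr 0)) (h Z) = Gf_mul f (inl y) (Gf_mul f (inr 0) Z).
    case=> z /=; rewrite !addr0 ?add0r //.
    by rewrite addrC subrK /f Kfi.
  have E : f (0 + 0) = f ((finv (y + f 0) - y) + (finv (y + f 0) - y)).
    exact (congr1 (@unsum G) (LG _ _ _ Hh (inr 0) (inr 0))).
  rewrite addr0 in E; move/fK_inj: E => E.
  set v := finv (y + f 0) in E.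
  have fv : f v = y + f 0 by rewrite /v /f Kfi.
  have vv : v + v = y + y.
    transitivity (y + y + ((v - y) + (v - y))); first zgroup.
    by rewrite -E addr0.
  by rewrite -{1}vv P1 fv; zgroup.
split=> //.
exists phi; split; first by exists psi.
by move=> x y; apply: psi_inj; rewrite psi_morph !phiK.
Qed.
End Construct.

Section Main.
Variables (Q : Type) (mul : Q -> Q -> Q) (e : Q).
Hypotheses (hl : is_loop mul e) (hc : loop_commutative mul).

Lemma iv_to_i : (exists (G : zmodType) (g : G -> G) (t : G),
         [/\ loop_iso mul (Gf_mul (fun x => g x + t)), additive_aut g,
             forall x, g (x + x) = x + x & g t = t]) ->
   A_loop mul /\ index_le2 mul (middle_nucleus mul).
Proof.
move=> [G [g [t [[phi [pb pm]] hg g2 gt]]]].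
case: pb => phi' K1 K2.
have LQ : LA mul.
  exact (LA_transport K1 K2 pm (LA_Gf hg g2 gt)).
split; first exact: (A_loop_of_LA hl hc LQ).
have midl : forall a, middle_nucleus mul (phi' (inl a)).
  move=> a u v; apply: (can_inj K1); rewrite !pm K2; exact: Gf_middle.
exists (phi' (inr 0)) => x.
case E: (phi x) => [a|a].
  by left; rewrite -(K1 x) E.
right; exists (phi' (inl a)) => //.
by apply: (can_inj K1); rewrite pm !K2 E /= add0r.
Qed.

Lemma iii_to_iv : (exists (G : zmodType) (f : G -> G),
         [/\ loop_iso mul (Gf_mul f), bijective f,
             forall x y, f (x + y) = f x + f y - f 0,
             forall x, f (x + x) = x + x + f 0 &
             f (f 0) = f 0 + f 0]) ->
  (exists (G : zmodType) (g : G -> G) (t : G),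
         [/\ loop_iso mul (Gf_mul (fun x => g x + t)), additive_aut g,
             forall x, g (x + x) = x + x & g t = t]).
Proof.
move=> [G [f [iso [fi fK Kf] P1 P2 P3]]].
exists G, (fun x => f x - f 0), (f 0).
have -> : (fun x => f x - f 0 + f 0) = f.
  by apply: functional_extensionality => x; rewrite subrK.
split=> //.
- split.
    exists (fun x => fi (x + f 0)) => x; first by rewrite subrK fK.
    by rewrite Kf addrK.
  by move=> x y; rewrite P1; zgroup.
- by move=> x; rewrite P2 addrK.
- by rewrite P3 addrK.
Qed.

Lemma iv_to_iii : (exists (G : zmodType) (g : G -> G) (t : G),
         [/\ loop_iso mul (Gf_mul (fun x => g x + t)), additive_aut g,
             forall x, g (x + x) = x + x & g t = t]) ->
  (exists (G : zmodType) (f : G -> G),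
         [/\ loop_iso mul (Gf_mul f), bijective f,
             forall x y, f (x + y) = f x + f y - f 0,
             forall x, f (x + x) = x + x + f 0 &
             f (f 0) = f 0 + f 0]).
Proof.
move=> [G [g [t [iso hg g2 gt]]]].
have g00 : g 0 = 0 := g0 hg.
have gDD := gD hg.
exists G, (fun x => g x + t); split=> //.
- case: (hg) => [[gi gK Kg] _].
  exists (fun x => gi (x - t)) => x; first by rewrite addrK gK.
  by rewrite Kg subrK.
- by move=> x y; rewrite gDD g00; zgroup.
- by move=> x; rewrite g2 g00 add0r.
- by rewrite g00 add0r gt.
Qed.

Lemma iii_to_ii : (exists (G : zmodType) (f : G -> G),
         [/\ loop_iso mul (Gf_mul f), bijective f,
             forall x y, f (x + y) = f x + f y - f 0,
             forall x, f (x + x) = x + x + f 0 &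
             f (f 0) = f 0 + f 0]) ->
   exists (G : zmodType) (f : G -> G),
         [/\ loop_iso mul (Gf_mul f), bijective f,
             forall x y, f (x + y) = f x + f y - f 0,
             forall x, f (x + x) = x + x + f 0 &
             forall x, (f (f x) + f (f x)) - (f x + f x) = f (f 0)].
Proof.
move=> [G [f [iso fb P1 P2 P3]]].
exists G, f; split=> // x.
have A : f (f x) + f (f x) = f (f x + f x) + f 0 by rewrite P1 subrK.
have B : f x + f x = x + x + f 0 + f 0.
  by rewrite -[f x + f x](subrK (f 0)) -P1 P2.
rewrite A B P1 (P1 (x + x)) P2 P3; zgroup.
Qed.

Lemma ii_to_iii : (exists (G : zmodType) (f : G -> G),
         [/\ loop_iso mul (Gf_mul f), bijective f,
             forall x y, f (x + y) = f x + f y - f 0,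
             forall x, f (x + x) = x + x + f 0 &
             forall x, (f (f x) + f (f x)) - (f x + f x) = f (f 0)]) ->
  (exists (G : zmodType) (f : G -> G),
         [/\ loop_iso mul (Gf_mul f), bijective f,
             forall x y, f (x + y) = f x + f y - f 0,
             forall x, f (x + x) = x + x + f 0 &
             f (f 0) = f 0 + f 0]).
Proof.
move=> [G [f [iso fb P1 P2 P4]]].
exists G, f; split=> //.
have E := P4 0.
apply/eqP; rewrite -subr_eq0; apply/eqP.
transitivity (f (f 0) + f (f 0) - (f 0 + f 0) - f (f 0)); first zgroup.
by rewrite E subrr.
Qed.
End Main.

Unset Implicit Arguments.

Theorem proposition2p7 (Q : Type) (mul : Q -> Q -> Q) (e : Q) :
  is_loop mul e -> loop_commutative mul ->
  (exists H : Q -> Prop, is_subgroup mul e H /\ index2 mul H) ->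
  [<-> (* (i) *)
       A_loop mul /\ index_le2 mul (middle_nucleus mul);
       (* (ii) *)
       exists (G : zmodType) (f : G -> G),
         [/\ loop_iso mul (Gf_mul f), bijective f,
             forall x y, f (x + y) = f x + f y - f 0,
             forall x, f (x + x) = x + x + f 0 &
             forall x, (f (f x) + f (f x)) - (f x + f x) = f (f 0)];
       (* (iii) *)
       exists (G : zmodType) (f : G -> G),
         [/\ loop_iso mul (Gf_mul f), bijective f,
             forall x y, f (x + y) = f x + f y - f 0,
             forall x, f (x + x) = x + x + f 0 &
             f (f 0) = f 0 + f 0];
       (* (iv) *)
       exists (G : zmodType) (g : G -> G) (t : G),
         [/\ loop_iso mul (Gf_mul (fun x => g x + t)), additive_aut g,
             forall x, g (x + x) = x + x & g t = t]].
Proof.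
move=> hl hc hH.
have i_iii : A_loop mul /\ index_le2 mul (middle_nucleus mul) ->
  (exists (G : zmodType) (f : G -> G),
         [/\ loop_iso mul (Gf_mul f), bijective f,
             forall x y, f (x + y) = f x + f y - f 0,
             forall x, f (x + x) = x + x + f 0 &
             f (f 0) = f 0 + f 0]).
  move=> [hA hN]; case: (exists_K hl hc hH hN) => K [c [KE KM KDv Kmid [Kc Kdec]]].
  exact: (construct hl hc hA KE KM KDv Kmid Kc Kdec).
split; [|split; [|split]].
- by move/i_iii/iii_to_ii.
- by move/ii_to_iii.
- by move/iii_to_iv.
- by move/(iv_to_i hl hc).
Qed.
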